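(* Let $M$ be a finite set of primes and let $f,g$ be real functions on the primes such that (i) $p>f(p)\geq g(p)\geq 0$ for all $p\in M$, and (ii) $p>g(p)\geq f(p)\geq 0$ for all primes $p\notin M$. Then for all $z>0$, \[L(z,g)\geq \prod_{p\in M}\frac{p-f(p)}{p-g(p)}\,L(z,f).\]
   Context: For a function $h$ on the primes with $0\le h(p)<p$ for all $p$, and $z>0$, define $L(z,h)=\sum_{q\leq z}\mu^2(q)\prod_{p\mid q}\frac{h(p)}{p-h(p)}$, where $q$ runs over positive integers and $\mu$ is the Möbius function. *)

(* Defs.v *)
From mathcomp Require Import all_boot all_order all_algebra.
Set Implicit Arguments. Unset Strict Implicit. Unset Printing Implicit Defensive.
Import Order.TTheory GRing.Theory Num.Theory.
Local Open Scope ring_scope.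

Definition squarefree (q : nat) : bool :=
  [forall p : 'I_q.+1, prime p ==> ~~ (p * p %| q)%N].

Definition mu2 {R : archiRealFieldType} (q : nat) : R := if squarefree q then 1 else 0.

(* L(z,h) = sum_{1 <= q <= z} mu^2(q) prod_{p | q} h(p)/(p - h(p)) ;
   positive integers q <= z are exactly 1 <= q <= truncn z *)
Definition L {R : archiRealFieldType} (z : R) (h : nat -> R) : R :=
  \sum_(1 <= q < (Num.truncn z).+1)
     mu2 q * \prod_(p <- primes q) (h p / (p%:R - h p)).

(* Main.v *)
Require Import Defs.
From mathcomp Require Import all_boot all_order all_algebra.
From mathcomp Require Import zify ring lra.
Import Order.TTheory GRing.Theory Num.Theory.
Local Open Scope ring_scope.
Set Implicit Arguments. Unset Strict Implicit.

Section Aux.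
Variable R : archiRealFieldType.
Implicit Types h : nat -> R.

Definition Fh h (r : nat) : R := h r / (r%:R - h r).
Definition W h (q : nat) : R := mu2 q * \prod_(r <- primes q) Fh h r.
Definition S (N : nat) h : R := \sum_(1 <= q < N.+1) W h q.
Definition valid h := forall r, prime r -> 0 <= h r /\ h r < r%:R.

Lemma mu2_ge0 q : 0 <= @mu2 R q.
Proof. by rewrite /mu2; case: ifP. Qed.

Lemma Fh_ge0 h r : 0 <= h r -> h r < r%:R -> 0 <= Fh h r.
Proof. by move=> h0 h1; rewrite /Fh divr_ge0 // subr_ge0 ltW. Qed.

Lemma Fh_mono h h' r : 0 <= h' r -> h' r <= h r -> h r < r%:R -> Fh h' r <= Fh h r.
Proof.
move=> h0 h1 h2.
have u0 : 0 < r%:R - h r by rewrite subr_gt0.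
have u1 : 0 < r%:R - h' r by rewrite subr_gt0; apply: le_lt_trans h2.
rewrite /Fh ler_pdivrMr // mulrAC ler_pdivlMr //.
nra.
Qed.

Lemma prodF_ge0 h n : valid h -> 0 <= \prod_(r <- primes n) Fh h r.
Proof.
move=> vh; rewrite big_seq; apply: prodr_ge0 => r.
rewrite mem_primes => /and3P[pr _ _]; case: (vh r pr) => ??; exact: Fh_ge0.
Qed.

Lemma W_ge0 h q : valid h -> 0 <= W h q.
Proof. by move=> vh; rewrite /W mulr_ge0 ?mu2_ge0 ?prodF_ge0. Qed.

Lemma sqf_ndvd q p : squarefree q -> (0 < q)%N -> prime p -> (p %| q)%N -> ~~ (p %| q %/ p)%N.
Proof.
move=> /forallP sq q0 pr pq.
have pl : (p < q.+1)%N by rewrite ltnS dvdn_leq.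
move: (sq (Ordinal pl)) => /= /implyP /(_ pr) npp.
apply: contra npp => pqp.
by rewrite -(divnK pq) dvdn_mul.
Qed.

Lemma sqf_div q p : squarefree q -> (0 < q)%N -> (p %| q)%N -> squarefree (q %/ p).
Proof.
move=> /forallP sq q0 pq; apply/forallP => r; apply/implyP => pr; apply/negP => dv.
have rq : (r * r %| q)%N by apply: dvdn_trans dv _; rewrite -{2}(divnK pq) dvdn_mulr.
have r0 : (0 < r)%N by apply: prime_gt0.
have rl : (r < q.+1)%N.
  have := dvdn_leq q0 rq; move: (ltn_ord r) => _; nia.
by move: (sq (Ordinal rl)) => /= /implyP /(_ pr); rewrite rq.
Qed.

Lemma primes_perm q p : squarefree q -> (0 < q)%N -> prime p -> (p %| q)%N ->
  perm_eq (primes q) (p :: primes (q %/ p)).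
Proof.
move=> sq q0 pr pq.
have np := sqf_ndvd sq q0 pr pq.
have qp0 : (0 < q %/ p)%N by rewrite divn_gt0 ?prime_gt0 // dvdn_leq.
apply: uniq_perm; first exact: primes_uniq.
  by rewrite /= primes_uniq andbT mem_primes pr qp0 /= np.
move=> r; rewrite -{1}(divnK pq) primesM ?qp0 ?prime_gt0 // (primes_prime pr).
by rewrite !in_cons in_nil orbF orbC.
Qed.

Lemma Wsplit k h p q : prime p -> (0 < q)%N -> (p %| q)%N ->
  (forall r, r != p -> k r = h r) ->
  W k q = Fh k p * (mu2 q * \prod_(r <- primes (q %/ p)) Fh h r).
Proof.
move=> pr q0 pq ek; rewrite /W /mu2.
case sq: (squarefree q); last by rewrite !mul0r mulr0.
rewrite (perm_big _ (primes_perm sq q0 pr pq)) big_cons !mul1r; congr (_ * _).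
apply: eq_big_seq => r; rewrite mem_primes => /and3P[_ _ rq]; rewrite /Fh ek //.
apply/eqP => erp; move: rq; rewrite erp => rq.
by move: (sqf_ndvd sq q0 pr pq); rewrite rq.
Qed.

Lemma sum_div (G : nat -> R) p N : (0 < p)%N ->
  \sum_(1 <= q < N.+1 | (p %| q)%N) G (q %/ p)%N = \sum_(1 <= m < (N %/ p)%N.+1) G m.
Proof.
move=> p0; elim: N => [|N IH].
  by rewrite div0n !big_geq.
rewrite big_mkcond big_nat_recr //= -big_mkcond IH divnS //.
case: (p %| N.+1)%N => /=; last by rewrite addr0.
by rewrite add1n [in RHS]big_nat_recr.
Qed.


Lemma step N p h h' : prime p -> valid h -> valid h' ->
  (forall r, r != p -> h' r = h r) -> h' p <= h p ->
  (1 + Fh h' p) * S N h <= (1 + Fh h p) * S N h'.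
Proof.
move=> pr vh vh' eh le_p.
set A := \sum_(1 <= q < N.+1 | ~~ (p %| q)%N) W h q.
set B := \sum_(1 <= q < N.+1 | (p %| q)%N)
           (mu2 q * \prod_(r <- primes (q %/ p)%N) Fh h r).
have decomp : forall k, (forall r, r != p -> k r = h r) -> S N k = A + Fh k p * B.
  move=> k ek; rewrite /S (bigID (fun q => (p %| q)%N)) /= addrC; congr (_ + _).
    apply: eq_bigr => q npq; rewrite /W; congr (_ * _).
    apply: eq_big_seq => r; rewrite mem_primes => /and3P[_ _ rq]; rewrite /Fh ek //.
    by apply/eqP => erp; move: npq; rewrite -erp rq.
  rewrite /B big_distrr /= big_nat_cond [in RHS]big_nat_cond.
  apply: eq_bigr => q /andP[/andP[q1 _] pq].
  exact: Wsplit.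
pose H m := if (p %| m)%N then 0 else W h m.
have H0 m : 0 <= H m by rewrite /H; case: ifP => // _; apply: W_ge0.
have B0 : 0 <= B.
  apply: sumr_ge0 => q _; apply: mulr_ge0; [exact: mu2_ge0 | exact: prodF_ge0].
have BA : B <= A.
  apply: (@le_trans _ _ (\sum_(1 <= q < N.+1 | (p %| q)%N) H (q %/ p)%N)).
    rewrite /B big_nat_cond [X in _ <= X]big_nat_cond.
    apply: ler_sum => q /andP[/andP[q1 _] pq].
    rewrite /mu2; case sq: (squarefree q); last by rewrite mul0r.
    have np := sqf_ndvd sq q1 pr pq.
    by rewrite /H (negbTE np) /W /mu2 (sqf_div sq q1 pq).
  rewrite sum_div ?prime_gt0 //.
  rewrite [X in _ <= X](_ : _ = \sum_(1 <= m < N.+1) H m); last first.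
    by rewrite /A big_mkcond; apply: eq_bigr => q _; rewrite /H; case: (p %| q)%N.
  rewrite [X in _ <= X](big_cat_nat _ (n := (N %/ p)%N.+1)) //=; last first.
    by rewrite ltnS leq_div.
  by rewrite lerDl sumr_ge0.
have mono : Fh h' p <= Fh h p.
  have [a0 a1] := vh' p pr; have [b0 b1] := vh p pr.
  exact: Fh_mono.
rewrite (decomp h) // (decomp h') //.
have t1 : 0 <= Fh h p - Fh h' p by rewrite subr_ge0.
have t2 : 0 <= A - B by rewrite subr_ge0.
have := mulr_ge0 t1 t2.
nra.
Qed.

Lemma step2 N p h h' : prime p -> valid h -> valid h' ->
  (forall r, r != p -> h' r = h r) -> h' p <= h p ->
  (p%:R - h p) / (p%:R - h' p) * S N h <= S N h'.
Proof.
move=> pr vh vh' eh le_p.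
have := step N pr vh vh' eh le_p.
have [a0 a1] := vh' p pr; have [b0 b1] := vh p pr.
have u0 : 0 < p%:R - h p by rewrite subr_gt0.
have u1 : 0 < p%:R - h' p by rewrite subr_gt0.
have e1 : 1 + Fh h' p = (p%:R - h p) / (p%:R - h' p) * (1 + Fh h p).
  rewrite /Fh; field; apply/andP; split; rewrite lt0r_neq0 //.
have pos : 0 < 1 + Fh h p by apply: ltr_pwDl => //; apply: Fh_ge0.
by rewrite e1 mulrAC [X in X <= _]mulrC ler_pM2l.
Qed.

Lemma mainL (M : seq nat) : uniq M -> all prime M -> forall f g : nat -> R,
  (forall p, p \in M -> g p <= f p /\ f p < p%:R /\ 0 <= g p) ->
  (forall p, prime p -> p \notin M -> f p <= g p /\ g p < p%:R /\ 0 <= f p) ->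
  forall N, S N g >= (\prod_(p <- M) ((p%:R - f p) / (p%:R - g p))) * S N f.
Proof.
elim: M => [|p M IH] uM aM f g H1 H2 N.
  rewrite big_nil mul1r; apply: ler_sum => q _; rewrite /W ler_wpM2l ?mu2_ge0 //.
  rewrite big_seq [X in _ <= X]big_seq; apply: ler_prod => r.
  rewrite mem_primes => /and3P[pr _ _]; have [a0 [a1 a2]] := H2 r pr (negbT (in_nil r)).
  rewrite Fh_ge0 //=; [apply: Fh_mono => // | apply: le_lt_trans a1 ] => //.
move: uM aM => /= /andP[pM uM] /andP[pr aM].
have [gp [fp g0]] := H1 p (mem_head _ _).
pose g' r := if r == p then f p else g r.
have vg : valid g.
  move=> r rp; case rM: (r \in p :: M).
    have [? [? ?]] := H1 r rM; split => //; apply: le_lt_trans; eassumption.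
  by have [? [? ?]] := H2 r rp (negbT rM); split => //; apply: le_trans; eassumption.
have vg' : valid g'.
  move=> r rp; rewrite /g'; case: eqP => [->|_]; last exact: vg.
  by split => //; apply: le_trans g0 gp.
have IH' := IH uM aM f g'.
have H1' : forall r, r \in M -> g' r <= f r /\ f r < r%:R /\ 0 <= g' r.
  move=> r rM; have rp : r != p by apply: contraNneq pM => <-.
  by rewrite /g' (negbTE rp); apply: H1; rewrite in_cons rM orbT.
have H2' : forall r, prime r -> r \notin M -> f r <= g' r /\ g' r < r%:R /\ 0 <= f r.
  move=> r rp rM; rewrite /g'; case: eqP => [->|/eqP ne].
    by split => //; split => //; apply: le_trans g0 gp.
  by apply: H2 => //; rewrite in_cons negb_or ne.
have := IH' H1' H2' N.
have eqP' : \prod_(r <- M) ((r%:R - f r) / (r%:R - g' r)) =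
            \prod_(r <- M) ((r%:R - f r) / (r%:R - g r)).
  apply: eq_big_seq => r rM; have rp : r != p by apply: contraNneq pM => <-.
  by rewrite /g' (negbTE rp).
rewrite eqP' => le1.
have st := @step2 N p g' g pr vg' vg.
have st' : (p%:R - g' p) / (p%:R - g p) * S N g' <= S N g.
  apply: st; last by rewrite /g' eqxx.
  by move=> r /negbTE ne; rewrite /g' ne.
move: st'; rewrite /g' eqxx => st'.
rewrite big_cons -mulrA; apply: le_trans st'; apply: ler_wpM2l => //.
apply: divr_ge0; rewrite subr_ge0 ltW //; apply: le_lt_trans fp; exact: gp.
Qed.

End Aux.

Theorem lemma2 (R : archiRealFieldType) (M : seq nat) (f g : nat -> R) :
  uniq M -> all prime M ->
  (forall p, p \in M -> g p <= f p /\ f p < p%:R /\ 0 <= g p) ->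
  (forall p, prime p -> p \notin M -> f p <= g p /\ g p < p%:R /\ 0 <= f p) ->
  forall z : R, 0 < z ->
  L z g >= (\prod_(p <- M) ((p%:R - f p) / (p%:R - g p))) * L z f.
Proof.
move=> uM aM H1 H2 z _.
exact: (mainL uM aM H1 H2 (Num.truncn z)).
Qed.
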